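(* Let $F$ be a field of characteristic zero and let $Q$ be a finite quiver with vertex set $Q_0=\{1,\dots,n\}$ such that the path algebra $FQ$ is a PI algebra. Let $\pi$ be an arbitrary set of paths in $Q$, let $FQ_\pi$ be the subalgebra of $FQ$ generated by $\pi$, and let \[A_\pi=\{A\in M_n(F)\mid A_{i,j}=0 \text{ whenever there is no path in } \tilde{\pi} \text{ from } i \text{ to } j\},\] where $\tilde\pi$ is the set of all paths of $Q$ that are (nonzero) products of elements of $\pi$. Then $\mathrm{Id}(FQ_\pi)=\mathrm{Id}(A_\pi)$.
   Context: A path of length $\ell$ in $Q$ is a concatenation of $\ell$ composable arrows; $s(p)$ and $t(p)$ denote the starting and terminal vertices of a path $p$; for each vertex $i$ there is a length-zero path $e_i$ with $s(e_i)=t(e_i)=i$. The path algebra $FQ$ is the $F$-vector space with basis all paths of $Q$, with product of paths $p,q$ equal to the concatenation $pq$ if $t(p)=s(q)$ and $0$ otherwise. For a set $\pi$ of paths, $FQ_\pi$ is the (not necessarily unital) subalgebra of $FQ$ generated by $\pi$, i.e. the linear span of $\tilde\pi$. $M_n(F)$ is the algebra of $n\times n$ matrices over $F$; equivalently $A_\pi$ is the linear span of the elementary matrices $e_{s(p)t(p)}$, $p\in\tilde\pi$. For an $F$-algebra $A$, $\mathrm{Id}(A)$ denotes the T-ideal of the free associative algebra $F\langle X\rangle$ on countably many variables consisting of all polynomial identities satisfied by $A$; $A$ is PI if $\mathrm{Id}(A)\neq\{0\}$. *)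

(* Defs.v *)
From HB Require Import structures.
From mathcomp Require Import all_boot all_order all_algebra.
Set Implicit Arguments. Unset Strict Implicit. Unset Printing Implicit Defensive.
Import GRing.Theory.
Local Open Scope ring_scope.

(* A polynomial is represented by a finite formal sum of monomials c * x_{i1} ... x_{ik};
   a word [:: i1; ...; ik] encodes the monomial x_{i1} ... x_{ik}. *)
Definition ncpoly (F : Type) := seq (F * seq nat).

Definition nccoef (F : nmodType) (f : ncpoly F) (w : seq nat) : F :=
  \sum_(cw <- f | cw.2 == w) cw.1.

Definition ncpoly_nonzero (F : nmodType) (f : ncpoly F) : Prop :=
  exists w, nccoef f w != 0.

Definition eval_word (T : Type) (one : T) (mul : T -> T -> T)
  (phi : nat -> T) (w : seq nat) : T :=
  foldr (fun i acc => mul (phi i) acc) one w.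

Definition eval_ncpoly (F T : Type) (zero one : T) (add mul : T -> T -> T)
  (scale : F -> T -> T) (phi : nat -> T) (f : ncpoly F) : T :=
  foldr (fun cw acc => add (scale cw.1 (eval_word one mul phi cw.2)) acc) zero f.

Section Quiver.
Variables (F : fieldType) (n : nat) (E : finType) (src tgt : E -> 'I_n).

(* A (candidate) path: a starting vertex and a sequence of arrows. *)
Definition qpath := ('I_n * seq E)%type.

Fixpoint valid_from (v : 'I_n) (s : seq E) : bool :=
  match s with
  | [::] => true
  | a :: s' => (src a == v) && valid_from (tgt a) s'
  end.

(* p is a path of Q (the length-0 path e_i is (i, [::])) *)
Definition is_qpath (p : qpath) : bool := valid_from p.1 p.2.

Definition endv (v : 'I_n) (s : seq E) : 'I_n := last v (map tgt s).
Definition qs (p : qpath) : 'I_n := p.1.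
Definition qt (p : qpath) : 'I_n := endv p.1 p.2.

(* concatenation of paths (meaningful when qt p = qs q) *)
Definition qcat (p q : qpath) : qpath := (p.1, p.2 ++ q.2).

(* Elements of the path algebra FQ: finitely supported F-valued functions on
   paths (coefficient of each basis path); the support consists of paths. *)
Definition pa := qpath -> F.

Definition in_FQ (x : pa) : Prop :=
  exists L : seq qpath, forall p, x p != 0 -> (p \in L) && is_qpath p.

Definition pa_zero : pa := fun _ => 0.
Definition pa_one : pa := fun r => if r.2 is [::] then 1 else 0. (* sum of all e_i *)
Definition pa_add (x y : pa) : pa := fun r => x r + y r.
Definition pa_scale (c : F) (x : pa) : pa := fun r => c * x r.
(* product: coefficient of r in x*y is the sum over all factorizations r = p q
   (p = first k arrows of r, q = the remaining arrows) of x p * y q. *)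
Definition pa_mul (x y : pa) : pa := fun r =>
  \sum_(k < (size r.2).+1)
     x (r.1, take k r.2) * y (endv r.1 (take k r.2), drop k r.2).

Definition pa_eval (phi : nat -> pa) (f : ncpoly F) : pa :=
  eval_ncpoly pa_zero pa_one pa_add pa_mul pa_scale phi f.

Definition pa_identity (S : pa -> Prop) (f : ncpoly F) : Prop :=
  forall phi : nat -> pa, (forall i, S (phi i)) -> pa_eval phi f = pa_zero.

Definition FQ_is_PI : Prop :=
  exists f : ncpoly F, ncpoly_nonzero f /\ pa_identity in_FQ f.

Inductive in_tilde (pi : qpath -> Prop) : qpath -> Prop :=
| tilde_base p : pi p -> in_tilde pi p
| tilde_step p q : in_tilde pi p -> pi q -> qt p = qs q -> in_tilde pi (qcat p q).

(* FQ_pi : the linear span of pi~ *)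
Definition in_FQpi (pi : qpath -> Prop) (x : pa) : Prop :=
  exists L : seq qpath, forall p, x p != 0 -> p \in L /\ in_tilde pi p.

Definition in_Api (pi : qpath -> Prop) (A : 'M[F]_n) : Prop :=
  forall i j, A i j != 0 -> exists p, in_tilde pi p /\ qs p = i /\ qt p = j.

Definition mx_eval (phi : nat -> 'M[F]_n) (f : ncpoly F) : 'M[F]_n :=
  eval_ncpoly (0 : 'M[F]_n) (1%:M) (fun A B => A + B) (fun A B => A *m B)
    (fun c A => c *: A) phi f.

Definition mx_identity (S : 'M[F]_n -> Prop) (f : ncpoly F) : Prop :=
  forall phi : nat -> 'M[F]_n, (forall i, S (phi i)) -> mx_eval phi f = 0.

End Quiver.

(* Main.v *)
Require Import Defs.
From HB Require Import structures.
From mathcomp Require Import all_boot all_order all_algebra.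
From Stdlib Require Import FunctionalExtensionality ClassicalEpsilon.
From mathcomp Require Import zify.
Set Implicit Arguments. Unset Strict Implicit. Unset Printing Implicit Defensive.
Import GRing.Theory.
Local Open Scope ring_scope.

Lemma eval_word_hom (T U : Type) (oneT : T) (mulT : T -> T -> T)
  (oneU : U) (mulU : U -> U -> U) (h : T -> U) :
  h oneT = oneU -> (forall a b, h (mulT a b) = mulU (h a) (h b)) ->
  forall phi w, h (eval_word oneT mulT phi w) = eval_word oneU mulU (h \o phi) w.
Proof. move=> h1 hM phi; elim=> [|i w IH] //=; by rewrite hM IH. Qed.

Lemma eval_ncpoly_hom (F T U : Type) zT oT (aT mT : T -> T -> T) (sT : F -> T -> T)
  zU oU (aU mU : U -> U -> U) (sU : F -> U -> U) (h : T -> U) :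
  h zT = zU -> h oT = oU -> (forall a b, h (aT a b) = aU (h a) (h b)) ->
  (forall a b, h (mT a b) = mU (h a) (h b)) -> (forall c a, h (sT c a) = sU c (h a)) ->
  forall phi f, h (eval_ncpoly zT oT aT mT sT phi f) = eval_ncpoly zU oU aU mU sU (h \o phi) f.
Proof.
move=> h0 h1 hA hM hS phi; elim=> [|[c w] f IH] //=.
by rewrite hA hS IH (eval_word_hom h1 hM).
Qed.

Lemma eval_word_ind (T : Type) (o : T) (m : T -> T -> T) (P : T -> Prop) phi :
  P o -> (forall a b, P a -> P b -> P (m a b)) -> (forall i, P (phi i)) ->
  forall w, P (eval_word o m phi w).
Proof. move=> Po Pm Pphi; elim=> //= i w IH; exact: Pm. Qed.

Lemma eval_ncpoly_ind (F T : Type) z o (a m : T -> T -> T) (sc : F -> T -> T) (P : T -> Prop) phi :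
  P z -> P o -> (forall x y, P x -> P y -> P (a x y)) -> (forall x y, P x -> P y -> P (m x y)) ->
  (forall c x, P x -> P (sc c x)) -> (forall i, P (phi i)) ->
  forall f, P (eval_ncpoly z o a m sc phi f).
Proof.
move=> Pz Po Pa Pm Ps Pphi; elim=> //= [[c w]] f IH; apply: Pa => //; apply: Ps.
exact: eval_word_ind.
Qed.

Lemma sum_if_eq (V : nmodType) (T : eqType) (U : seq T) (G : T -> V) r :
  uniq U -> \sum_(p <- U) (if p == r then G p else 0) = if r \in U then G r else 0.
Proof.
elim: U => [|a U IH] /=; first by rewrite big_nil.
case/andP=> Ha HU; rewrite big_cons IH // in_cons.
case: (eqVneq a r) => [<-|Hne] /=.
  by rewrite (negbTE Ha) addr0.
by rewrite add0r.
Qed.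

Lemma flatten_inj (A T : eqType) (g : A -> seq T) (P : pred A) L :
  (0 < L)%N -> (forall a, size (g a) = L) -> {in P &, injective g} ->
  forall s s', all P s -> all P s' -> flatten (map g s) = flatten (map g s') -> s = s'.
Proof.
move=> L0 Hsz Hinj; elim=> [|a s IH] [|b s'] //=.
- move=> _ _ /(congr1 size); rewrite size_cat Hsz /=; lia.
- move=> _ _ /(congr1 size); rewrite size_cat Hsz /=; lia.
case/andP=> Pa Ps /andP[Pb Ps'] H.
have Hab : g a = g b.
  by move: (congr1 (take L) H); rewrite !take_cat !Hsz ltnn subnn !take0 !cats0.
have Hr : flatten (map g s) = flatten (map g s').
  by move: (congr1 (drop L) H); rewrite !drop_cat !Hsz ltnn subnn !drop0.
by rewrite (Hinj a b Pa Pb Hab) (IH s' Ps Ps' Hr).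
Qed.

Lemma sum_enum_val (E : finType) (G : E -> nat) : (\sum_(a : E) G a = \sum_(i < #|E|) G (enum_val i))%N.
Proof. rewrite (reindex (@enum_val E predT)) /=; first done. exact: (onW_bij _ (enum_val_bij E)). Qed.

Lemma perm_counts (T : eqType) (s1 s2 : seq T) :
  (forall x, count_mem x s1 = count_mem x s2) -> perm_eq s1 s2.
Proof. move=> H; rewrite /perm_eq; apply/allP => x _ /=; by rewrite H. Qed.

Lemma digits_inj N m (c d : 'I_m -> nat) : (forall i, c i < N)%N -> (forall i, d i < N)%N ->
  (\sum_(i < m) c i * N ^ i = \sum_(i < m) d i * N ^ i)%N -> forall i, c i = d i.
Proof.
elim: m c d => [|m IH] c d Hc Hd H i; first by case: i.
have N0 : (0 < N)%N by apply: leq_ltn_trans (Hc i).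
move: H; rewrite !big_ord_recl /= !expn0 !muln1.
have Hs : forall (c' : 'I_m.+1 -> nat), (\sum_(i < m) c' (lift ord0 i) * N ^ bump 0 i =
     (\sum_(i < m) c' (lift ord0 i) * N ^ i) * N)%N.
  move=> c'; rewrite big_distrl /=; apply: eq_bigr => j _; by rewrite /bump /= add1n expnSr mulnA.
rewrite !Hs => H.
have H0 : c ord0 = d ord0.
  move: (congr1 (modn^~ N) H); rewrite ![(_ + _ * N)%N]addnC !modnMDl !modn_small //.
have H1 : (\sum_(i < m) c (lift ord0 i) * N ^ i = \sum_(i < m) d (lift ord0 i) * N ^ i)%N.
  move: H; rewrite H0 => /addnI /eqP; rewrite eqn_pmul2r // => /eqP.
  done.
case: (unliftP ord0 i) => [j ->|->] //.
exact: (IH (fun j => c (lift ord0 j)) (fun j => d (lift ord0 j))).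
Qed.

Lemma ew_count (E : finType) (wt : E -> nat) (s : seq E) :
  (\sum_(a <- s) wt a = \sum_(a : E) count_mem a s * wt a)%N.
Proof.
elim: s => [|b s IH]; first by rewrite big_nil big1.
rewrite big_cons IH /=.
under [RHS]eq_bigr do rewrite mulnDl.
rewrite big_split /=; congr (_ + _)%N; rewrite (bigD1 b) //= eqxx mul1n big1 ?addn0 // => a /negbTE.
by rewrite eq_sym => ->.
Qed.

Lemma ew_perm (E : finType) N (s1 s2 : seq E) : (size s1 < N)%N -> (size s2 < N)%N ->
  (\sum_(a <- s1) N ^ enum_rank a = \sum_(a <- s2) N ^ enum_rank a)%N -> perm_eq s1 s2.
Proof.
move=> H1 H2 H0.
have H : (\sum_(i < #|E|) count_mem (enum_val i) s1 * N ^ i = \sum_(i < #|E|) count_mem (enum_val i) s2 * N ^ i)%N.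
  have := H0; rewrite (ew_count _ s1) (ew_count _ s2) [X in (X = _)%N -> _]sum_enum_val [X in (_ = X)%N -> _]sum_enum_val.
  under eq_bigr => i _ do rewrite enum_valK.
  by under [X in (_ = X)%N -> _]eq_bigr => i _ do rewrite enum_valK.
apply: perm_counts => x; rewrite -(enum_rankK x).
apply: (digits_inj _ _ H (enum_rank x)).
- move=> i; exact: leq_ltn_trans (count_size _ _) H1.
- move=> i; exact: leq_ltn_trans (count_size _ _) H2.
Qed.

Lemma natr_inj0 (F : fieldType) : [pchar F] =i pred0 -> injective (fun k : nat => k%:R : F).
Proof.
move=> c0.
have Hs : forall a b, (a <= b)%N -> a%:R = b%:R :> F -> a = b.
  move=> a b Hab H; move: H; rewrite -(subnKC Hab) natrD -{1}(addr0 a%:R) => /addrI /esym /eqP.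
  by rewrite ((pcharf0P F).1 c0) => /eqP ->; rewrite addn0.
move=> a b /= H; case: (leqP a b) => Hab; first exact: Hs.
by apply/esym/Hs; [exact: ltnW|].
Qed.

Lemma coef_vanish (F : fieldType) (c0 : [pchar F] =i pred0) (T : eqType) (U : seq T)
  (a : T -> F) (e : T -> nat) r : uniq U -> r \in U -> (forall q, q \in U -> a q != 0 -> e q = e r -> q = r) ->
  (forall x : F, \sum_(q <- U) a q * x ^+ e q = 0) -> a r = 0.
Proof.
move=> HU Hr He Hx.
pose P : {poly F} := \sum_(q <- U) a q *: 'X^(e q).
have HP : P = 0.
  apply/eqP; apply: contraT => HP0.
  have := max_poly_roots HP0 (rs := [seq k%:R | k <- iota 0 (size P)]).
  rewrite size_map size_iota ltnn; apply.
    apply/allP => y /mapP [k _ ->]; rewrite /root /P horner_sum.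
    apply/eqP; rewrite -[RHS](Hx k%:R); apply: eq_bigr => q _; by rewrite hornerZ hornerXn.
  by rewrite map_inj_uniq ?iota_uniq //; exact: natr_inj0.
have := congr1 (fun p : {poly F} => p`_(e r)) HP; rewrite /P coef_sum coef0.
rewrite (eq_big_seq (fun q => if q == r then a q else 0)).
  by rewrite sum_if_eq // Hr.
move=> q Hq; rewrite coefZ coefXn; case: (eqVneq q r) => [->|Hne]; first by rewrite eqxx mulr1.
case: (eqVneq (e r) (e q)) => [Heq|]; last by rewrite mulr0.
case: (eqVneq (a q) 0) => [->|Haq]; first by rewrite mul0r.
by move: Hne; rewrite (He q Hq Haq (esym Heq)) eqxx.
Qed.

Section Main.
Variables (F : fieldType) (n : nat) (E : finType) (src tgt : E -> 'I_n).
Local Notation qpath := (qpath n E).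
Local Notation endv := (endv tgt).
Local Notation valid_from := (valid_from src tgt).

Lemma endv_cat v s t : endv v (s ++ t) = endv (endv v s) t.
Proof. by rewrite /Defs.endv map_cat last_cat. Qed.

Lemma valid_cat v s t : valid_from v (s ++ t) = valid_from v s && valid_from (endv v s) t.
Proof. elim: s v => [|a s IH] v //=. by rewrite IH andbA. Qed.


Lemma split_sum (p q r : qpath) (c : F) :
  \sum_(k < (size r.2).+1)
     (if (p == (r.1, take k r.2)) && (q == (endv r.1 (take k r.2), drop k r.2)) then c else 0)
  = if (qt tgt p == qs q) && (qcat p q == r) then c else 0.
Proof.
case: ifP => [/andP[/eqP Hpq /eqP Hr]|Hno].
  have Hk : (size p.2 < (size r.2).+1)%N by rewrite -Hr /= size_cat ltnS leq_addr.
  rewrite (bigD1 (Ordinal Hk)) //= big1 ?addr0.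
    rewrite -Hr /= take_size_cat // drop_size_cat //.
    idtac.
    have -> : endv p.1 p.2 = q.1 by exact: Hpq.
    by rewrite -!surjective_pairing !eqxx.
  move=> k /eqP Hk'; case: ifP => // /andP[/eqP Hp _]; exfalso; apply: Hk'.
  apply: val_inj => /=; rewrite Hp /= size_take; case: ltnP => //.
  have := ltn_ord k; rewrite ltnS => H1 H2; apply/eqP; rewrite eqn_leq H1 H2.
  done.
rewrite big1 // => k _; case: ifP => // /andP[/eqP Hp /eqP Hq].
exfalso; move: Hno; rewrite Hp Hq /qt /qs /qcat /= cat_take_drop -surjective_pairing !eqxx.
done.
Qed.


Definition fs := seq (F * qpath).
Definition fs_one : fs := [seq (1, (i, [::])) | i <- enum 'I_n].
Definition fs_scale (c : F) (s : fs) : fs := [seq (c * z.1, z.2) | z <- s].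
Definition fs_mul (s t : fs) : fs :=
  flatten [seq [seq (x.1 * y.1, qcat x.2 y.2) | y <- [seq y <- t | qt tgt x.2 == qs y.2]] | x <- s].
Definition fs_eval (phi : nat -> fs) (f : ncpoly F) : fs :=
  eval_ncpoly [::] fs_one cat fs_mul fs_scale phi f.

Definition toPA (s : fs) : pa F n E := fun r => \sum_(z <- s) (if z.2 == r then z.1 else 0).

Lemma toPA0 : toPA [::] = @pa_zero F n E.
Proof. apply: functional_extensionality => r; by rewrite /toPA big_nil. Qed.

Lemma toPA_cat s t : toPA (s ++ t) = pa_add (toPA s) (toPA t).
Proof. apply: functional_extensionality => r; by rewrite /toPA /pa_add big_cat. Qed.

Lemma toPA_scale c s : toPA (fs_scale c s) = pa_scale c (toPA s).
Proof.
apply: functional_extensionality => r; rewrite /toPA /pa_scale big_map mulr_sumr.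
apply: eq_bigr => z _ /=; case: ifP => //; by rewrite mulr0.
Qed.

Lemma toPA_one : toPA fs_one = @pa_one F n E.
Proof.
apply: functional_extensionality => [[v w]]; rewrite /toPA /pa_one big_map /=.
rewrite big_enum /=; case: w => [|a w].
  rewrite (bigD1 v) //= eqxx big1 ?addr0 // => i /negbTE Hi.
  by rewrite xpair_eqE Hi.
by rewrite big1 // => i _; rewrite xpair_eqE andbF.
Qed.

Lemma toPA_mul s t : toPA (fs_mul s t) = pa_mul tgt (toPA s) (toPA t).
Proof.
apply: functional_extensionality => r; rewrite /toPA /pa_mul /fs_mul big_flatten /=.
rewrite big_map; symmetry.
under eq_bigr => k _ do rewrite mulr_suml.
rewrite exchange_big /=; apply: eq_bigr => x _.
under eq_bigr => k _ do (rewrite mulr_sumr).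
rewrite exchange_big big_map big_filter [RHS]big_mkcond /=; apply: eq_bigr => y _.
have -> : (if qt tgt x.2 == qs y.2 then if qcat x.2 y.2 == r then x.1 * y.1 else 0 else 0)
  = if (qt tgt x.2 == qs y.2) && (qcat x.2 y.2 == r) then x.1 * y.1 else 0.
  by case: ifP.
rewrite -split_sum; apply: eq_bigr => k _.
by case: ifP; case: ifP; rewrite ?mulr0 ?mul0r.
Qed.


Variable wt : E -> nat.
Definition ew (s : seq E) : nat := \sum_(a <- s) wt a.

Definition toM (x : F) (s : fs) : 'M[F]_n :=
  \sum_(z <- s) (z.1 * x ^+ ew z.2.2) *: delta_mx (qs z.2) (qt tgt z.2).

Lemma toM0 x : toM x [::] = 0.
Proof. by rewrite /toM big_nil. Qed.

Lemma toM_cat x s t : toM x (s ++ t) = toM x s + toM x t.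
Proof. by rewrite /toM big_cat. Qed.

Lemma toM_scale x c s : toM x (fs_scale c s) = c *: toM x s.
Proof.
rewrite /toM big_map scaler_sumr; apply: eq_bigr => z _ /=.
by rewrite scalerA mulrA.
Qed.

Lemma toM_one x : toM x fs_one = 1%:M.
Proof.
rewrite /toM big_map big_enum /= [RHS]matrix_sum_delta; apply: eq_bigr => i _.
rewrite /ew big_nil expr0 mulr1 scale1r (bigD1 i) //= big1 ?addr0.
  by rewrite mxE eqxx scale1r.
by move=> j /negbTE Hj; rewrite mxE eq_sym Hj scale0r.
Qed.

Lemma qt_qcat (p q : qpath) : qt tgt p = qs q -> qt tgt (qcat p q) = qt tgt q.
Proof. by rewrite /qt /qcat /= endv_cat => ->. Qed.

Lemma toM_mul x s t : toM x (fs_mul s t) = toM x s *m toM x t.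
Proof.
rewrite /toM /fs_mul big_flatten /= big_map mulmx_suml; apply: eq_bigr => y _.
rewrite big_map big_filter big_mkcond mulmx_sumr; apply: eq_bigr => z _ /=.
rewrite -scalemxAl -scalemxAr scalerA mul_delta_mx_cond.
case: ifP => H; last by rewrite mulr0n scaler0.
rewrite mulr1n qt_qcat; last exact/eqP.
by rewrite /ew big_cat /= exprD; congr (_ *: _); rewrite mulrACA.
Qed.


Lemma toM_regroup x t :
  toM x t = \sum_(q <- undup (map snd t)) (toPA t q * x ^+ ew q.2) *: delta_mx (qs q) (qt tgt q).
Proof.
rewrite /toPA.
under [RHS]eq_bigr => q _ do rewrite mulr_suml scaler_suml.
rewrite exchange_big /toM; apply: eq_big_seq => z Hz.
transitivity (\sum_(q <- undup (map snd t))
   (if q == z.2 then (z.1 * x ^+ ew q.2) *: delta_mx (qs q) (qt tgt q) else 0)).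
  by rewrite sum_if_eq ?undup_uniq // mem_undup map_f.
apply: eq_bigr => q _; rewrite eq_sym; case: ifP => //.
by rewrite mul0r scale0r.
Qed.


Definition Hcomm := forall v c1 c2, valid_from v c1 -> valid_from v c2 ->
  endv v c1 = v -> endv v c2 = v -> c1 ++ c2 = c2 ++ c1.

Lemma comm_perm (HC : Hcomm) : forall s1 s2 v, valid_from v s1 -> valid_from v s2 ->
  perm_eq s1 s2 -> s1 = s2.
Proof.
elim=> [|a s1 IH] [|b s2] v //=.
- by move=> _ _ /perm_size.
- by move=> _ _ /perm_size.
case/andP=> /eqP Ha Hs1 /andP[/eqP Hb Hs2] Hp.
case: (eqVneq a b) => [Eab|Hab].
  subst b; rewrite perm_cons in Hp; by rewrite (IH s2 (tgt a)).
have Ha2 : a \in s2.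
  move: (perm_mem Hp a); rewrite !in_cons eqxx /= => /esym /orP [/eqP Hc|//].
  by rewrite Hc eqxx in Hab.
have Hb1 : b \in s1.
  move: (perm_mem Hp b); rewrite !in_cons eqxx /= => /orP [/eqP Hc|//].
  by rewrite Hc eqxx in Hab.
case/splitPr: Ha2 Hs2 Hp => q1 q2 Hs2 Hp.
case/splitPr: Hb1 Hs1 Hp => p1 p2 Hs1 Hp.
rewrite valid_cat /= in Hs2; case/and3P: Hs2 => Vq1 /eqP Ea _.
rewrite valid_cat /= in Hs1; case/and3P: Hs1 => Vp1 /eqP Eb _.
have := HC v (a :: p1) (b :: q1).
rewrite /= Ha Hb !eqxx Vp1 Vq1 /=.
have E1 : endv v (a :: p1) = v by change (endv (tgt a) p1 = v); rewrite -Eb.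
have E2 : endv v (b :: q1) = v by change (endv (tgt b) q1 = v); rewrite -Ea.
move=> /(_ isT isT E1 E2) [] Hc; by rewrite Hc eqxx in Hab.
Qed.


Lemma closed_cat v s t : valid_from v s -> endv v s = v -> valid_from v t -> endv v t = v ->
  valid_from v (s ++ t) /\ endv v (s ++ t) = v.
Proof. by move=> Vs Es Vt Et; rewrite valid_cat endv_cat Es Vs Vt Et. Qed.

Lemma closed_flatten v ss : (forall s, s \in ss -> valid_from v s /\ endv v s = v) ->
  valid_from v (flatten ss) /\ endv v (flatten ss) = v.
Proof.
elim: ss => [|s ss IH] H /=; first by [].
have [Vs Es] := H s (mem_head _ _).
have [Vt Et] : valid_from v (flatten ss) /\ endv v (flatten ss) = v.
  by apply: IH => t Ht; apply: H; rewrite in_cons Ht orbT.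
exact: closed_cat.
Qed.

Definition delta (p : qpath) : fs := [:: (1, p)].

Lemma toPA_delta p r : toPA (delta p) r = if p == r then 1 else 0.
Proof. by rewrite /toPA big_cons big_nil addr0. Qed.

Lemma delta_mul p q : qt tgt p = qs q ->
  pa_mul tgt (toPA (delta p)) (toPA (delta q)) = toPA (delta (qcat p q)).
Proof.
move=> H; rewrite -toPA_mul /fs_mul /delta /= H eqxx /=.
by rewrite mulr1.
Qed.

Lemma delta_mul1 p : pa_mul tgt (toPA (delta p)) (@pa_one F n E) = toPA (delta p).
Proof.
rewrite -toPA_one -toPA_mul; apply: functional_extensionality => r.
rewrite /toPA /fs_mul /delta /= cats0 big_map big_filter /fs_one big_map big_enum_cond /=.
rewrite (big_pred1 (qt tgt p)) => [|i]; last by rewrite /= eq_sym.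
by rewrite big_cons big_nil addr0 /qcat cats0 -surjective_pairing mulr1.
Qed.



Lemma pa_eval_pt phi f r : pa_eval tgt phi f r =
  \sum_(cw <- f) cw.1 * eval_word (@pa_one F n E) (pa_mul tgt) phi cw.2 r.
Proof.
elim: f => [|[c w] f IH]; first by rewrite big_nil.
by rewrite big_cons -IH.
Qed.

Lemma PI_comm : FQ_is_PI F src tgt -> Hcomm.
Proof.
move=> [f [[w0 Hw0] Hid]] v c1 c2 V1 V2 E1 E2.
apply/eqP; apply: contraT => Hne.
set al := c1 ++ c2 in Hne *; set be := c2 ++ c1 in Hne *.
set M := (\max_(cw <- f) \max_(i <- cw.2) i).+1.
pose g k := mkseq (fun i => i == k) M.
pose h (b : bool) := if b then al else be.
pose Y w := flatten (map h (flatten (map g w))).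
pose phi k := toPA (delta (v, Y [:: k])).
have Hcl : forall w, valid_from v (Y w) /\ endv v (Y w) = v.
  move=> w; apply: closed_flatten => s /mapP [b _ ->]; case: b => /=; exact: closed_cat.
have Hphi : forall i, in_FQ src tgt (phi i).
  move=> i; exists [:: (v, Y [:: i])] => p; rewrite /phi toPA_delta.
  case: (eqVneq (v, Y [:: i]) p) => [<-|_] /=; last by rewrite eqxx.
  move=> _.
  by rewrite mem_head /is_qpath /= (Hcl [:: i]).1.
have YC : forall k w, Y (k :: w) = Y [:: k] ++ Y w.
  move=> k w; rewrite /Y. have Hf : forall u, flatten (map g (k :: u)) = g k ++ flatten (map g u) by [].
  by rewrite !Hf (_ : flatten (map g [::]) = [::]) // cats0 map_cat flatten_cat.
have Hev : forall w, eval_word (@pa_one F n E) (pa_mul tgt) phi w =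
    if w is [::] then @pa_one F n E else toPA (delta (v, Y w)).
  elim=> [|k w IH] //=; rewrite IH; case: w IH => [|k' w'] _.
    exact: delta_mul1.
  rewrite /phi delta_mul; last by rewrite /qt /= (Hcl _).2.
  by rewrite /qcat /= -YC.
have HM : forall w i, w \in map snd f -> i \in w -> (i < M)%N.
  move=> w i /mapP [cw Hcw ->] Hi; rewrite ltnS.
  apply: leq_trans (leq_bigmax_seq cw Hcw isT); exact: (leq_bigmax_seq i Hi isT).
have Hal : (0 < size al)%N.
  have Hsz : size be = size al by rewrite /be /al !size_cat addnC.
  rewrite lt0n; apply/negP => /eqP Hal0.
  have Hal' := size0nil Hal0; have Hbe := size0nil (etrans Hsz Hal0).
  by move: Hne; rewrite Hal' Hbe eqxx.
have Hinj : forall w w', w \in map snd f -> w' \in map snd f -> Y w = Y w' -> w = w'.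
  move=> w w' Hw Hw' HY.
  have H1 : flatten (map g w) = flatten (map g w').
    apply: (@flatten_inj _ _ h predT (size al)) => //.
    - by case; rewrite //= /be /al !size_cat addnC.
    - move=> [] [] _ _ //= H; by move: Hne; rewrite H eqxx.
    - exact: all_predT.
    - exact: all_predT.
  apply: (@flatten_inj _ _ g (fun i => i < M)%N M) => //.
  - by move=> k; rewrite size_mkseq.
  - move=> k k' Hk Hk' Hg; have := congr1 (nth false ^~ k) Hg.
    rewrite /g !nth_mkseq // eqxx => /esym /eqP //.
  - by apply/allP => i Hi; apply: HM Hw Hi.
  - by apply/allP => i Hi; apply: HM Hw' Hi.
have Hw0f : w0 \in map snd f.
  have : has (fun cw => cw.2 == w0) f.
    apply: contraT => Hn; move: Hw0; by rewrite /nccoef big_hasC // eqxx.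
  by case/hasP => cw Hcw /eqP <-; apply: map_f.
have := congr1 (fun x => x (v, Y w0)) (Hid phi Hphi).
rewrite /= pa_eval_pt /pa_zero.
rewrite (eq_big_seq (fun cw => if cw.2 == w0 then cw.1 else 0)).
  rewrite -big_mkcond => H; move: Hw0; by rewrite /nccoef H eqxx.
move=> cw Hcw; have Hcw' : cw.2 \in map snd f by apply: map_f.
have -> : eval_word (@pa_one F n E) (pa_mul tgt) phi cw.2 (v, Y w0) =
    if Y cw.2 == Y w0 then 1 else 0.
  rewrite Hev; case Ecw: cw.2 => [|k w] /=.
    by rewrite /pa_one /=; case: (Y w0).
  by rewrite toPA_delta xpair_eqE eqxx.
have -> : (Y cw.2 == Y w0) = (cw.2 == w0).
  apply/eqP/eqP => [|->] //; exact: Hinj.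
by case: ifP; rewrite ?mulr1 ?mulr0.
Qed.

End Main.

Section Main3.
Variables (F : fieldType) (n : nat) (E : finType) (src tgt : E -> 'I_n).
Local Notation qpath := (qpath n E).

Lemma fs_eval_PA (s : nat -> fs F n E) f : toPA (fs_eval tgt s f) = pa_eval tgt (@toPA F n E \o s) f.
Proof.
apply: eval_ncpoly_hom.
- exact: toPA0.
- exact: toPA_one.
- exact: toPA_cat.
- exact: toPA_mul.
- exact: toPA_scale.
Qed.

Lemma fs_eval_M wt x (s : nat -> fs F n E) f : toM tgt wt x (fs_eval tgt s f) = mx_eval (toM tgt wt x \o s) f.
Proof.
apply: eval_ncpoly_hom.
- exact: toM0.
- exact: toM_one.
- exact: toM_cat.
- exact: toM_mul.
- exact: toM_scale.
Qed.

Lemma toPA_supp (s : fs F n E) p : toPA s p != 0 -> exists2 z, z \in s & (z.2 == p) && (z.1 != 0).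
Proof.
case: (boolP (has (fun z => (z.2 == p) && (z.1 != 0)) s)) => [/hasP [z Hz H]|Hn] H0.
  by exists z.
move: H0; rewrite /toPA big1_seq ?eqxx // => z /andP [_ Hz].
case: ifP => // /eqP Hp; apply/eqP; apply: contraR Hn => Hz0.
by apply/hasP; exists z => //; rewrite Hp eqxx.
Qed.

Lemma toM_supp wt x (s : fs F n E) i j : toM tgt wt x s i j != 0 ->
  exists2 z, z \in s & (qs z.2 == i) && (qt tgt z.2 == j).
Proof.
case: (boolP (has (fun z => (qs z.2 == i) && (qt tgt z.2 == j)) s)) => [/hasP [z Hz H]|Hn] H0.
  by exists z.
move: H0; rewrite /toM summxE big1_seq ?eqxx // => z /andP [_ Hz].
rewrite !mxE; case: (boolP ((i == qs z.2) && (j == qt tgt z.2))) => [H|]; last by rewrite mulr0.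
exfalso; move/negP: Hn; apply; apply/hasP; exists z => //.
by case/andP: H => /eqP -> /eqP ->; rewrite !eqxx.
Qed.

Lemma tilde_valid (pi : qpath -> Prop) : (forall p, pi p -> is_qpath src tgt p) ->
  forall p, in_tilde tgt pi p -> is_qpath src tgt p.
Proof.
move=> Hpi p; elim=> [q /Hpi //|p1 q Hp1 IH Hq Hpq].
rewrite /is_qpath /qcat /= valid_cat; apply/andP; split; first exact: IH.
have -> : endv tgt p1.1 p1.2 = q.1 by exact: Hpq.
exact: Hpi.
Qed.

Definition fs_valid (s : fs F n E) := forall z, z \in s -> is_qpath src tgt z.2.

Lemma fs_eval_valid (s : nat -> fs F n E) f : (forall k, fs_valid (s k)) -> fs_valid (fs_eval tgt s f).
Proof.
move=> Hs; apply: eval_ncpoly_ind => //.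
- by move=> z /mapP [i _ ->].
- by move=> a b Ha Hb z; rewrite mem_cat => /orP [/Ha|/Hb].
- move=> a b Ha Hb z /flattenP [l /mapP [y Hy ->]] /mapP [w].
  rewrite mem_filter => /andP [/eqP Hyw Hw] ->.
  rewrite /is_qpath /qcat /= valid_cat; apply/andP; split; first exact: (Ha y Hy).
  have -> : endv tgt y.2.1 y.2.2 = w.2.1 by exact: Hyw.
  exact: Hb.
- move=> c a Ha z /mapP [y Hy ->]; exact: (Ha y Hy).
Qed.

End Main3.

Unset Implicit Arguments.
Set Strict Implicit.

Theorem theorem1 (F : fieldType) (charF0 : [pchar F] =i pred0)
  (n : nat) (E : finType) (src tgt : E -> 'I_n)
  (HPI : FQ_is_PI F src tgt)
  (pi : qpath n E -> Prop) (Hpi : forall p, pi p -> is_qpath src tgt p) :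
  forall f : ncpoly F,
    pa_identity tgt (in_FQpi tgt pi) f <-> mx_identity (in_Api tgt pi) f.
Proof.
move=> f; split.
- move=> Hpa phi Hphi.
  have Pex : forall k (i j : 'I_n), exists p : qpath n E,
      phi k i j != 0 -> in_tilde tgt pi p /\ qs p = i /\ qt tgt p = j.
    move=> k i j; case: (boolP (phi k i j != 0)) => H.
      by have [p Hp] := Hphi k i j H; exists p.
    by exists (i, [::]).
  pose P k i j := proj1_sig (constructive_indefinite_description _ (Pex k i j)).
  have HP : forall k i j, phi k i j != 0 -> in_tilde tgt pi (P k i j) /\ qs (P k i j) = i /\ qt tgt (P k i j) = j.
    move=> k i j; exact: (proj2_sig (constructive_indefinite_description _ (Pex k i j))).
  pose s k : fs F n E := [seq (phi k ij.1 ij.2, P k ij.1 ij.2) | ij <- [seq (i, j) | i <- enum 'I_n, j <- enum 'I_n]].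
  have HsM : forall k, toM tgt (fun _ => 0%N) 1 (s k) = phi k.
    move=> k; rewrite /toM big_map big_allpairs big_enum /= [RHS]matrix_sum_delta.
    apply: eq_bigr => i _; rewrite big_enum /=; apply: eq_bigr => j _.
    rewrite expr1n mulr1; case: (eqVneq (phi k i j) 0) => [->|H]; first by rewrite !scale0r.
    by have [_ [-> ->]] := HP k i j H.
  have HsP : forall k, in_FQpi tgt pi (toPA (s k)).
    move=> k; exists (map snd (s k)) => p /toPA_supp [z Hz /andP [/eqP Hzp Hz0]].
    split; first by rewrite -Hzp; apply: map_f.
    move: Hz Hzp Hz0; rewrite /s => /mapP [ij _ ->] /= <- H.
    by have [] := HP k ij.1 ij.2 H.
  have -> : phi = toM tgt (fun _ => 0%N) 1 \o s.
    by apply: functional_extensionality => k /=; rewrite HsM.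
  rewrite -fs_eval_M toM_regroup.
  have Hz := Hpa (@toPA F n E \o s) HsP; rewrite -fs_eval_PA in Hz.
  rewrite big1 // => q _; by rewrite Hz /pa_zero mul0r scale0r.
- move=> Hmx phi Hphi.
  pose Ls k := proj1_sig (constructive_indefinite_description _ (Hphi k)).
  have HLs : forall k p, phi k p != 0 -> p \in Ls k /\ in_tilde tgt pi p.
    move=> k; exact: (proj2_sig (constructive_indefinite_description _ (Hphi k))).
  pose s k : fs F n E := [seq (phi k p, p) | p <- [seq p <- undup (Ls k) | phi k p != 0]].
  have Hs : forall k, toPA (s k) = phi k.
    move=> k; apply: functional_extensionality => r.
    rewrite /toPA /s big_map big_filter big_mkcond /=.
    rewrite (eq_bigr (fun p => if p == r then phi k p else 0)); last first.
      move=> p _; case: (eqVneq (phi k p) 0) => [->|Hp] /=; first by case: ifP.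
      done.
    rewrite sum_if_eq ?undup_uniq // mem_undup.
    case: (eqVneq (phi k r) 0) => [->|H]; first by case: ifP.
    by rewrite (HLs k r H).1.
  have HsT : forall k z, z \in s k -> in_tilde tgt pi z.2.
    move=> k z /mapP [p]; rewrite mem_filter => /andP [H _] -> /=.
    exact: (HLs k p H).2.
  have Hval : forall k, fs_valid src tgt (s k).
    move=> k z Hz; exact: (tilde_valid Hpi (HsT k z Hz)).
  have -> : phi = @toPA F n E \o s.
    by apply: functional_extensionality => k /=; rewrite Hs.
  rewrite -fs_eval_PA.
  set t := fs_eval tgt s f.
  have Vt : fs_valid src tgt t := fs_eval_valid Hval.
  have HC := PI_comm HPI.
  apply: functional_extensionality => r; rewrite /pa_zero.
  set U := undup (map snd t).
  case: (boolP (r \in U)) => HrU; last first.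
    rewrite /toPA big1_seq // => z /andP [_ Hz]; case: eqP => // Hzr.
    by move: HrU; rewrite mem_undup -Hzr map_f.
  pose N := (\max_(q <- U) size q.2).+1.
  pose wt (a : E) := (N ^ enum_rank a)%N.
  have Hx : forall x : F, toM tgt wt x t = 0.
    move=> x; rewrite /t fs_eval_M; apply: Hmx => k i j /toM_supp [z Hz /andP [/eqP Hi /eqP Hj]].
    by exists z.2; split; [exact: (HsT k z Hz)|].
  suff : toPA t r * ((qs r == qs r) && (qt tgt r == qt tgt r))%:R = 0 by rewrite !eqxx mulr1.
  apply: (coef_vanish charF0 (U := U) (a := fun q => toPA t q *
      (((qs r == qs q) && (qt tgt r == qt tgt q))%:R)) (e := fun q => ew wt q.2)).
  - exact: undup_uniq.
  - exact: HrU.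
  - move=> q Hq Haq He.
    have Hs1 : qs r = qs q.
      apply/eqP; apply: contraR Haq => Hn; by rewrite (negbTE Hn) mulr0 eqxx.
    have Hvq : is_qpath src tgt q by move: Hq; rewrite mem_undup => /mapP [z Hz ->]; apply: Vt.
    have Hvr : is_qpath src tgt r by move: HrU; rewrite mem_undup => /mapP [z Hz ->]; apply: Vt.
    have Hsz : forall q', q' \in U -> (size q'.2 < N)%N.
      by move=> q' Hq'; rewrite ltnS; apply: (leq_bigmax_seq q' Hq' isT).
    have Hperm := ew_perm (Hsz q Hq) (Hsz r HrU) He.
    move: Hvq Hvr Hperm Hs1; case: q {Hq Hsz He Haq} => [q1 q2]; case: r {HrU Hx} => [r1 r2] /=.
    rewrite /is_qpath /qs /= => Hvq Hvr Hperm Hs1; subst r1.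
    by rewrite (comm_perm HC Hvq Hvr Hperm).
  - move=> x; have := congr1 (fun A : 'M[F]_n => A (qs r) (qt tgt r)) (Hx x).
    rewrite toM_regroup /= summxE => H.
    have H0 : (0 : 'M[F]_n) (qs r) (qt tgt r) = 0 by rewrite mxE.
    apply: (etrans _ (etrans H H0)); apply: eq_bigr => q _; by rewrite !mxE mulrAC.
Qed.
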